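(* Let $m\ge 0$ be an integer, $K\ge 1$, $h>0$, $L=Kh$, and work on the periodic interval $\mathbb{T}_L=\mathbb{R}/L\mathbb{Z}$. Let $c>0$ and $\Delta t>0$, and let $S_{\pm}$ be the shift operators $S_{\pm}f(x)=f(x\pm c\Delta t/2)$. Let $\mathcal{I}$ (resp. $\mathcal{J}$) denote the Hermite interpolation operator of order $m$ on the primary grid (resp. dual grid) defined below. Suppose $p^h(\cdot,n\Delta t)\in\operatorname{Range}(\mathcal{I})$ and $v^h(\cdot,(n+\tfrac12)\Delta t)\in\operatorname{Range}(\mathcal{J})$ for all integers $n\ge 0$ (with also $v^h(\cdot,-\Delta t/2)\in\operatorname{Range}(\mathcal J)$ given), and that for all $n\ge0$, with $t=n\Delta t$, $$v^h(\cdot,t+\tfrac{\Delta t}{2})=v^h(\cdot,t-\tfrac{\Delta t}{2})+\mathcal{J}S_{+}p^h(\cdot,t)-\mathcal{J}S_{-}p^h(\cdot,t),$$ $$p^h(\cdot,t+\Delta t)=p^h(\cdot,t)+\mathcal{I}S_{+}v^h(\cdot,t+\tfrac{\Delta t}{2})-\mathcal{I}S_{-}v^h(\cdot,t+\tfrac{\Delta t}{2}).$$ Define $P^h_{\pm}(\cdot,t)=p^h(\cdot,t)\mp S_{\pm}v^h(\cdot,t-\tfrac{\Delta t}{2})$ and $V^h_{\pm}(\cdot,t+\tfrac{\Delta t}{2})=v^h(\cdot,t+\tfrac{\Delta t}{2})\mp S_{\pm}p^h(\cdot,t)$, and $$Q^h(t)=|P^h_+(\cdot,t)|_{m+1}^2+|P^h_-(\cdot,t)|_{m+1}^2,\qquad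 R^h(t+\tfrac{\Delta t}{2})=|V^h_+(\cdot,t+\tfrac{\Delta t}{2})|_{m+1}^2+|V^h_-(\cdot,t+\tfrac{\Delta t}{2})|_{m+1}^2.$$ Then for every integer $n\ge 0$, $Q^h((n+1)\Delta t)=R^h((n+\tfrac12)\Delta t)=Q^h(n\Delta t)$; in particular $Q^h(n\Delta t)=R^h((n+\tfrac12)\Delta t)=Q^h(0)$ for all $n$.
   Context: Primary grid: nodes $x_j=jh$, $j=0,\dots,K-1$ (mod $L$); dual grid: nodes $x_{j+1/2}=(j+\tfrac12)h$. For a smooth $L$-periodic function $f$, the Hermite interpolant of order $m$ on the primary grid, $\mathcal{I}f$, is the unique $L$-periodic function which on each cell $[x_j,x_{j+1}]$ is a polynomial of degree at most $2m+1$ and whose value and first $m$ derivatives agree with those of $f$ at both endpoints of the cell; $\mathcal{J}$ is defined identically with the dual-grid nodes as cell endpoints. Both are linear projections, and their ranges consist of $C^m$ periodic piecewise polynomials. The seminorm is $|f|_{m+1}^2=\int_{\mathbb{T}_L}|\partial_x^{m+1}f|^2\,dx$ with associated semi-inner product $\langle f,g\rangle_{m+1}=\int_{\mathbb{T}_L}\partial_x^{m+1}f\,\partial_x^{m+1}g\,dx$. It is a known fact (Goodrich et al.) that each of $\mathcal{I},\mathcal{J}$ satisfies the orthogonality property $\langle \mathcal{I}f,\,g-\mathcal{I}g\rangle_{m+1}=0$ for all smooth (or range-of-interpolation) periodic $f,g$. The displayed update is the one-dimensional Hermite-leapfrog scheme for $p_t=c\,v_x$, $v_t=c\,p_x$ (valid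 as a description of the scheme when $c\Delta t<h$). *)

(* Defs.v *)
From Stdlib Require Import Reals Lra List ClassicalEpsilon.
Open Scope R_scope.

Fixpoint peval (q : list R) (x : R) : R :=
  match q with
  | nil => 0
  | a :: t => a + x * peval t x
  end.

Fixpoint pderiv_aux (n : nat) (l : list R) : list R :=
  match l with
  | nil => nil
  | a :: t => (INR n * a) :: pderiv_aux (S n) t
  end.

(* formal derivative: [a0;a1;a2;...] |-> [1*a1; 2*a2; ...] *)
Definition pderiv (q : list R) : list R := pderiv_aux 1 (tl q).

Definition pderivn (k : nat) (q : list R) : list R := Nat.iter k pderiv q.

Lemma peval_continuity (q : list R) : continuity (peval q).
Proof.
  induction q as [|a t IH]; simpl.
  - apply continuity_const. intros x y; reflexivity.
  - change (continuity (fct_cte a + id * peval t)%F).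
    apply continuity_plus.
    + apply continuity_const. intros x y; reflexivity.
    + apply continuity_mult; [apply derivable_continuous, derivable_id | exact IH].
Qed.

Lemma sq_peval_continuity (q : list R) (x : R) :
  continuity_pt (fun y => peval q y * peval q y) x.
Proof.
  change (continuity_pt (peval q * peval q)%F x).
  apply continuity_pt_mult; apply peval_continuity.
Qed.

Definition sq_int (q : list R) (a b : R) : R :=
  match Rle_dec a b with
  | left H =>
      RiemannInt (@continuity_implies_RiemannInt
                    (fun y => peval q y * peval q y) a b H
                    (fun x _ => sq_peval_continuity q x))
  | right _ => 0
  end.

Definition has_derivs (m : nat) (f : R -> R) (ds : nat -> R -> R) : Prop :=
  (forall x, ds 0%nat x = f x) /\
  (forall k, (k < m)%nat -> forall x, derivable_pt_lim (ds k) x (ds (S k) x)).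

(* The primary
   grid has a = 0, the dual grid has a = h/2.  [HermiteInterp m K h a f g]
   says g is (the) Hermite interpolant of f of order m on this grid:
   g is (K h)-periodic, on each cell [a+jh, a+(j+1)h] it is a polynomial of
   degree <= 2m+1, and its value and first m derivatives agree with those
   of f at both endpoints of the cell. *)
Definition HermiteInterp (m K : nat) (h a : R) (f g : R -> R) : Prop :=
  (forall x, g (x + INR K * h) = g x) /\
  exists ds : nat -> R -> R, has_derivs m f ds /\
  exists q : nat -> list R,
    forall j, (j < K)%nat ->
      (length (q j) <= 2 * m + 2)%nat /\
      (forall x, a + INR j * h <= x <= a + INR (S j) * h -> g x = peval (q j) x) /\
      (forall k, (k <= m)%nat ->
         peval (pderivn k (q j)) (a + INR j * h) = ds k (a + INR j * h) /\
         peval (pderivn k (q j)) (a + INR (S j) * h) = ds k (a + INR (S j) * h)).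

Definition InRange (m K : nat) (h a : R) (g : R -> R) : Prop :=
  exists f, (forall x, f (x + INR K * h) = f x) /\ HermiteInterp m K h a f g.

Definition PPRep (L : R) (f : R -> R) (pts : list R) (qs : list (list R)) : Prop :=
  (2 <= length pts)%nat /\
  nth 0 pts 0 = 0 /\ last pts 0 = L /\
  (forall i, (S i < length pts)%nat -> nth i pts 0 < nth (S i) pts 0) /\
  length qs = pred (length pts) /\
  (forall i, (S i < length pts)%nat ->
     forall x, nth i pts 0 <= x <= nth (S i) pts 0 -> f x = peval (nth i qs nil) x).

Fixpoint pp_sum (m : nat) (pts : list R) (qs : list (list R)) : R :=
  match pts, qs with
  | t0 :: ((t1 :: _) as pts'), q :: qs' =>
      sq_int (pderivn (S m) q) t0 t1 + pp_sum m pts' qs'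
  | _, _ => 0
  end.

(* |f|_{m+1}^2 = \int_{T_L} |d^{m+1} f|^2 dx, for f a piecewise polynomial
   on [0,L] (the derivative is taken cell-wise, i.e. almost everywhere). *)
Definition seminorm_sq (m : nat) (L : R) (f : R -> R) : R :=
  epsilon (inhabits 0)
    (fun s => exists pts qs, PPRep L f pts qs /\ s = pp_sum m pts qs).

Definition Splus (c dt : R) (f : R -> R) : R -> R := fun x => f (x + c * dt / 2).
Definition Sminus (c dt : R) (f : R -> R) : R -> R := fun x => f (x - c * dt / 2).

(* Main.v *)
Require Import Defs.
From Stdlib Require Import Reals.
From Stdlib Require Import Lra Lia List Classical ClassicalEpsilon ZArith.
From Coquelicot Require Import Coquelicot.
Open Scope R_scope.

Module MA.

Lemma pderiv_aux_S k l x :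
  peval (pderiv_aux (S k) l) x = peval (pderiv_aux k l) x + peval l x.
Proof.
  revert k; induction l as [|b t IH]; intro k; cbn [peval pderiv_aux]; [lra|].
  rewrite IH. rewrite (S_INR k). ring.
Qed.

Lemma peval_derive q x : derivable_pt_lim (peval q) x (peval (pderiv q) x).
Proof.
  induction q as [|a t IH].
  - simpl. unfold pderiv; simpl. apply derivable_pt_lim_const.
  - assert (H : derivable_pt_lim (fun y => a + y * peval t y) x
                  (0 + (1 * peval t x + x * peval (pderiv t) x))).
    { apply (derivable_pt_lim_plus (fun _ => a) (fun y => y * peval t y)).
      apply derivable_pt_lim_const.
      apply (derivable_pt_lim_mult id (peval t)). apply derivable_pt_lim_id. exact IH. }
    replace (peval (pderiv (a :: t)) x) with (0 + (1 * peval t x + x * peval (pderiv t) x)).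
    exact H.
    unfold pderiv; cbn [tl]. destruct t as [|b t']; cbn [peval pderiv_aux tl]; [lra|].
    rewrite (pderiv_aux_S 1). cbn [peval pderiv_aux]. simpl INR. ring.
Qed.

Lemma peval_is_derive q x : is_derive (peval q) x (peval (pderiv q) x).
Proof. apply is_derive_Reals, peval_derive. Qed.

Lemma pderivn_S k q : pderivn (S k) q = pderiv (pderivn k q).
Proof. reflexivity. Qed.

Lemma Derive_n_peval k q x : Derive_n (peval q) k x = peval (pderivn k q) x.
Proof.
  revert x; induction k; intro x; [reflexivity|].
  simpl Derive_n. rewrite (Derive_ext _ (peval (pderivn k q))) by exact IHk.
  apply is_derive_unique. apply peval_is_derive.
Qed.

Lemma peval_cont q x : continuous (peval q) x.
Proof. apply continuity_pt_filterlim. apply peval_continuity. Qed.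

Lemma pderiv_aux_length k l : length (pderiv_aux k l) = length l.
Proof. revert k; induction l; simpl; auto. Qed.

Lemma pderiv_length q : length (pderiv q) = (length q - 1)%nat.
Proof. unfold pderiv. rewrite pderiv_aux_length. destruct q; simpl; lia. Qed.

Lemma pderivn_length k q : length (pderivn k q) = (length q - k)%nat.
Proof. induction k; simpl. lia. change (length (pderiv (pderivn k q)) = (length q - S k)%nat).
  rewrite pderiv_length, IHk. lia. Qed.

Lemma pderivn_zero k q x : (length q <= k)%nat -> peval (pderivn k q) x = 0.
Proof. intro H. assert (Hl := pderivn_length k q).
  destruct (pderivn k q); [reflexivity| simpl in Hl; lia]. Qed.

Fixpoint padd (p q : list R) : list R :=
  match p, q with
  | nil, _ => q
  | _, nil => p
  | a :: p', b :: q' => (a + b) :: padd p' q'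
  end.
Lemma padd_ok p q x : peval (padd p q) x = peval p x + peval q x.
Proof. revert q; induction p as [|a p IH]; intros [|b q]; simpl; try ring. rewrite IH; ring. Qed.

Definition pscal (c : R) (p : list R) := map (fun a => c * a) p.
Lemma pscal_ok c p x : peval (pscal c p) x = c * peval p x.
Proof. induction p; simpl; [ring|]. rewrite IHp; ring. Qed.

Fixpoint ptrans (s : R) (p : list R) : list R :=
  match p with
  | nil => nil
  | a :: t => padd (a :: nil) (padd (0 :: ptrans s t) (pscal s (ptrans s t)))
  end.
Lemma ptrans_ok s p x : peval (ptrans s p) x = peval p (x + s).
Proof. induction p; cbn [ptrans peval]; [ring|]. rewrite !padd_ok, pscal_ok. cbn [peval]. rewrite IHp. ring. Qed.

Lemma Derive_n_loc f q k x d : 0 < d ->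
  (forall y, x - d < y < x + d -> f y = peval q y) ->
  Derive_n f k x = peval (pderivn k q) x.
Proof.
  intros Hd H. rewrite <- Derive_n_peval. apply Derive_n_ext_loc.
  exists (mkposreal d Hd). intros y Hy. apply H.
  unfold ball in Hy; simpl in Hy; unfold AbsRing_ball, abs, minus, plus, opp in Hy; simpl in Hy.
  apply Rabs_def2 in Hy. lra.
Qed.

Lemma Derive_n_cell f q k s t x :
  (forall y, s <= y <= t -> f y = peval q y) -> s < x < t ->
  Derive_n f k x = peval (pderivn k q) x.
Proof.
  intros H Hx. apply (Derive_n_loc f q k x (Rmin (x - s) (t - x))).
  apply Rmin_case; lra. intros y Hy. apply H.
  assert (Rmin (x - s) (t - x) <= x - s) by apply Rmin_l.
  assert (Rmin (x - s) (t - x) <= t - x) by apply Rmin_r. lra.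
Qed.

End MA.
Import MA.

Module MB.

Inductive Chain (P : R -> R -> Prop) : R -> R -> Prop :=
| ch1 a b : a < b -> P a b -> Chain P a b
| ch2 a t b : a < t -> P a t -> Chain P t b -> Chain P a b.

Lemma chain_lt P a b : Chain P a b -> a < b.
Proof. induction 1; lra. Qed.

Lemma chain_snoc P a t b : Chain P a t -> t < b -> P t b -> Chain P a b.
Proof.
  induction 1; intros.
  - eapply ch2; eauto. apply ch1; auto.
  - eapply ch2; eauto.
Qed.

Definition Loc (P : R -> R -> Prop) :=
  forall x, exists d, 0 < d /\ (forall s, x - d < s < x -> P s x) /\
                      (forall t, x < t < x + d -> P x t).

Lemma chain_exists P a b : a < b -> Loc P -> Chain P a b.
Proof.
  intros Hab HL.
  set (E := fun t => a < t <= b /\ Chain P a t).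
  destruct (HL a) as [d0 [Hd0 [_ Hr0]]].
  set (t0 := a + Rmin d0 (b - a) / 2).
  assert (Hm0 : 0 < Rmin d0 (b - a)) by (apply Rmin_case; lra).
  assert (Hm1 : Rmin d0 (b - a) <= d0) by apply Rmin_l.
  assert (Hm2 : Rmin d0 (b - a) <= b - a) by apply Rmin_r.
  assert (Et0 : E t0).
  { unfold E, t0; split; [lra|]. apply ch1; [lra|]. apply Hr0. lra. }
  assert (Hbd : bound E) by (exists b; intros t [Ht _]; lra).
  destruct (completeness E Hbd (ex_intro _ t0 Et0)) as [T [HT1 HT2]].
  assert (Tb : T <= b) by (apply HT2; intros t [Ht _]; lra).
  assert (aT : t0 <= T) by (apply HT1; exact Et0).
  destruct (HL T) as [d [Hd [Hl Hr]]].
  assert (Hex : exists t, E t /\ T - d < t).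
  { apply NNPP; intro Hn.
    assert (T <= T - d); [|lra].
    apply HT2. intros t Et. apply Rnot_lt_le. intro Hlt. apply Hn. exists t; auto. }
  destruct Hex as [t [[Ht1 Ht2] Htd]].
  assert (tT : t <= T) by (apply HT1; split; auto).
  assert (CT : Chain P a T).
  { destruct (Req_dec t T) as [<-|Hne]; auto.
    apply (chain_snoc P a t T); auto; [lra|]. apply Hl. lra. }
  destruct (Req_dec T b) as [<-|Hne]; auto.
  exfalso.
  set (t' := T + Rmin d (b - T) / 2).
  assert (Hn0 : 0 < Rmin d (b - T)) by (apply Rmin_case; lra).
  assert (Hn1 : Rmin d (b - T) <= d) by apply Rmin_l.
  assert (Hn2 : Rmin d (b - T) <= b - T) by apply Rmin_r.
  assert (Et' : E t').
  { unfold E, t'; split; [lra|]. apply (chain_snoc P a T); auto; [lra|]. apply Hr. lra. }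
  assert (t' <= T) by (apply HT1; exact Et'). unfold t' in *; lra.
Qed.

Lemma chain_isRInt P (phi H : R -> R) a b : Chain P a b ->
  (forall s t, P s t -> s < t -> is_RInt phi s t (H t - H s)) ->
  is_RInt phi a b (H b - H a).
Proof.
  intros C HP; induction C.
  - apply HP; auto.
  - replace (H b - H a) with (plus (H t - H a) (H b - H t)).
    apply (is_RInt_Chasles phi a t b); auto. unfold plus; simpl. ring.
Qed.

Lemma chain_ext P (phi psi : R -> R) a b : Chain P a b ->
  (forall s t, P s t -> s < t -> ex_RInt phi s t /\ (forall x, s < x < t -> phi x = psi x)) ->
  ex_RInt phi a b /\ ex_RInt psi a b /\ RInt phi a b = RInt psi a b.
Proof.
  intros C HP; induction C.
  - destruct (HP a b) as [H1 H2]; auto.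
    assert (Hx : forall x, Rmin a b < x < Rmax a b -> phi x = psi x).
    { rewrite Rmin_left, Rmax_right by lra. auto. }
    split; [auto|split]. eapply ex_RInt_ext; eauto. apply RInt_ext; auto.
  - destruct (HP a t) as [H1 H2]; auto.
    destruct IHC as [E1 [E2 E3]].
    assert (Hx : forall x, Rmin a t < x < Rmax a t -> phi x = psi x).
    { rewrite Rmin_left, Rmax_right by lra. auto. }
    assert (H1' : ex_RInt psi a t) by (eapply ex_RInt_ext; eauto).
    split; [eapply ex_RInt_Chasles; eauto|split; [eapply ex_RInt_Chasles; eauto|]].
    rewrite <- (RInt_Chasles phi a t b), <- (RInt_Chasles psi a t b); auto.
    rewrite E3, (RInt_ext phi psi a t Hx). reflexivity.
Qed.

Lemma Loc_and P Q : Loc P -> Loc Q -> Loc (fun s t => P s t /\ Q s t).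
Proof.
  intros HP HQ x. destruct (HP x) as [d1 [H1 [Hl1 Hr1]]]. destruct (HQ x) as [d2 [H2 [Hl2 Hr2]]].
  exists (Rmin d1 d2).
  assert (Rmin d1 d2 <= d1) by apply Rmin_l. assert (Rmin d1 d2 <= d2) by apply Rmin_r.
  split; [apply Rmin_case; lra|split; intros; split;
    [apply Hl1|apply Hl2|apply Hr1|apply Hr2]; lra].
Qed.

Lemma chain_mono (P Q : R -> R -> Prop) a b : (forall s t, P s t -> Q s t) -> Chain P a b -> Chain Q a b.
Proof. intros HPQ C; induction C; [apply ch1|eapply ch2]; eauto. Qed.

End MB.
Import MB.

Module MC.

Definition PolyOn (f : R -> R) s t := exists q, forall y, s <= y <= t -> f y = peval q y.
Definition PW f := Loc (PolyOn f).

Lemma Loc_mono (P Q : R -> R -> Prop) : (forall s t, P s t -> Q s t) -> Loc P -> Loc Q.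
Proof. intros H HP x. destruct (HP x) as [d [? [? ?]]]. exists d; split; [|split]; intros; auto. Qed.

Lemma PW_plus f g : PW f -> PW g -> PW (fun x => f x + g x).
Proof.
  intros Hf Hg. eapply Loc_mono; [|apply (Loc_and _ _ Hf Hg)].
  intros s t [[q1 H1] [q2 H2]]. exists (padd q1 q2). intros y Hy. rewrite padd_ok, H1, H2; auto.
Qed.

Lemma PW_scal c f : PW f -> PW (fun x => c * f x).
Proof.
  intros Hf. eapply Loc_mono; [|apply Hf].
  intros s t [q1 H1]. exists (pscal c q1). intros y Hy. rewrite pscal_ok, H1; auto.
Qed.

Lemma PW_ext f g : (forall x, f x = g x) -> PW f -> PW g.
Proof. intros E Hf. eapply Loc_mono; [|apply Hf]. intros s t [q H]. exists q. intros; rewrite <- E; auto. Qed.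

Lemma PW_minus f g : PW f -> PW g -> PW (fun x => f x - g x).
Proof. intros Hf Hg. apply (PW_ext (fun x => f x + (-1) * g x)). intros; ring.
  apply PW_plus; auto. apply PW_scal; auto. Qed.

Lemma PW_shift f c : PW f -> PW (fun x => f (x + c)).
Proof.
  intros Hf x. destruct (Hf (x + c)) as [d [Hd [Hl Hr]]]. exists d; split; [auto|split].
  - intros s Hs. destruct (Hl (s + c)) as [q Hq]; [lra|]. exists (ptrans c q). intros y Hy.
    rewrite ptrans_ok. apply Hq. lra.
  - intros t Ht. destruct (Hr (t + c)) as [q Hq]; [lra|]. exists (ptrans c q). intros y Hy.
    rewrite ptrans_ok. apply Hq. lra.
Qed.

Lemma PW_poly q : PW (peval q).
Proof. intro x. exists 1; split; [lra|split; intros; exists q; auto]. Qed.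

Definition GridPoly (K : nat) (h a0 : R) (g : R -> R) : Prop :=
  (forall x, g (x + INR K * h) = g x) /\
  exists q : nat -> list R, forall j, (j < K)%nat ->
     forall x, a0 + INR j * h <= x <= a0 + INR (S j) * h -> g x = peval (q j) x.

Lemma periodic_Z (g : R -> R) L : (forall x, g (x + L) = g x) ->
  forall z x, g (x + IZR z * L) = g x.
Proof.
  intros Hp.
  assert (Hn : forall n x, g (x + INR n * L) = g x).
  { induction n; intro x. simpl. f_equal; ring.
    rewrite S_INR. replace (x + (INR n + 1) * L) with ((x + INR n * L) + L) by ring.
    rewrite Hp. apply IHn. }
  intros z x. destruct (Z.le_gt_cases 0 z) as [Hz|Hz].
  - rewrite <- (Z2Nat.id z Hz), <- INR_IZR_INZ. apply Hn.
  - assert (Hz' : (0 <= - z)%Z) by lia.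
    replace z with (- Z.of_nat (Z.to_nat (- z)))%Z by lia.
    rewrite opp_IZR, <- INR_IZR_INZ.
    rewrite <- (Hn (Z.to_nat (-z)) (x + - INR (Z.to_nat (- z)) * L)). f_equal; ring.
Qed.

Lemma GridPoly_cell K h a0 g : (1 <= K)%nat -> 0 < h -> GridPoly K h a0 g ->
  forall k : Z, exists q, forall y, a0 + IZR k * h <= y <= a0 + (IZR k + 1) * h ->
     g y = peval q y.
Proof.
  intros HK Hh [Hp [q Hq]] k.
  assert (HKz : (0 < Z.of_nat K)%Z) by lia.
  set (z := (k / Z.of_nat K)%Z). set (r := (k mod Z.of_nat K)%Z).
  assert (Hr : (0 <= r < Z.of_nat K)%Z) by (apply Z.mod_pos_bound; lia).
  assert (Hk : k = (Z.of_nat K * z + r)%Z) by (apply Z.div_mod; lia).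
  set (j := Z.to_nat r).
  assert (Hj : (j < K)%nat) by lia.
  assert (HIk : IZR k = INR K * IZR z + INR j).
  { rewrite Hk at 1. rewrite plus_IZR, mult_IZR, <- INR_IZR_INZ. unfold j. rewrite (INR_IZR_INZ (Z.to_nat r)), Z2Nat.id by lia. reflexivity. }
  exists (ptrans (- (IZR z * (INR K * h))) (q j)). intros y Hy.
  rewrite ptrans_ok. transitivity (g (y + - (IZR z * (INR K * h)))).
  { rewrite <- (periodic_Z g _ Hp z (y + - (IZR z * (INR K * h)))). f_equal; ring. }
  apply Hq; auto. rewrite S_INR. rewrite HIk in Hy.
  split; nra.
Qed.

Lemma GridPoly_PW K h a0 g : (1 <= K)%nat -> 0 < h -> GridPoly K h a0 g -> PW g.
Proof.
  intros HK Hh HG x. set (y := (x - a0) / h).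
  assert (Hx : x = a0 + y * h) by (unfold y; field; lra).
  destruct (archimed y) as [A1 A2].
  destruct (archimed (- y)) as [B1 B2].
  set (k1 := (up y - 1)%Z). set (k2 := (- up (- y))%Z).
  assert (K1 : IZR k1 = IZR (up y) - 1) by (unfold k1; rewrite minus_IZR; reflexivity).
  assert (K2 : IZR k2 = - IZR (up (- y))) by (unfold k2; rewrite opp_IZR; reflexivity).
  destruct (GridPoly_cell K h a0 g HK Hh HG k1) as [q1 Hq1].
  destruct (GridPoly_cell K h a0 g HK Hh HG k2) as [q2 Hq2].
  set (d := Rmin (a0 + (IZR k1 + 1) * h - x) (x - (a0 + IZR k2 * h))).
  assert (D1 : d <= a0 + (IZR k1 + 1) * h - x) by apply Rmin_l.
  assert (D2 : d <= x - (a0 + IZR k2 * h)) by apply Rmin_r.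
  assert (E1 : 0 < a0 + (IZR k1 + 1) * h - x) by (rewrite K1, Hx; nra).
  assert (E2 : 0 < x - (a0 + IZR k2 * h)) by (rewrite K2, Hx; nra).
  exists d. split; [unfold d; apply Rmin_case; lra|split].
  - intros s Hs. exists q2. intros t Ht. apply Hq2. split.
    + lra.
    + rewrite K2, Hx in *. nra.
  - intros t Ht. exists q1. intros u Hu. apply Hq1. split.
    + rewrite K1, Hx in *. nra.
    + lra.
Qed.

Lemma Hermite_GridPoly m K h a0 f g : HermiteInterp m K h a0 f g -> GridPoly K h a0 g.
Proof.
  intros [Hp [ds [_ [q Hq]]]]. split; auto. exists q. intros j Hj x Hx. apply (Hq j Hj); auto.
Qed.

Lemma InRange_GridPoly m K h a0 g : InRange m K h a0 g -> GridPoly K h a0 g.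
Proof. intros [f [_ H]]. eapply Hermite_GridPoly; eauto. Qed.

End MC.
Import MC.

Module MD.

Definition RepAB (a b : R) (f : R -> R) (pts : list R) (qs : list (list R)) : Prop :=
  (2 <= length pts)%nat /\
  nth 0 pts 0 = a /\ last pts 0 = b /\
  (forall i, (S i < length pts)%nat -> nth i pts 0 < nth (S i) pts 0) /\
  length qs = pred (length pts) /\
  (forall i, (S i < length pts)%nat ->
     forall x, nth i pts 0 <= x <= nth (S i) pts 0 -> f x = peval (nth i qs nil) x).

Lemma chain_rep f a b : Chain (PolyOn f) a b -> exists pts qs, RepAB a b f pts qs.
Proof.
  induction 1 as [a b Hab [q Hq]|a t b Hat [q Hq] C [pts [qs [H1 [H2 [H3 [H4 [H5 H6]]]]]]]].
  - exists (a :: b :: nil), (q :: nil). repeat split; simpl; auto.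
    + intros i Hi. destruct i; simpl in *; [lra|lia].
    + intros i Hi x Hx. destruct i; simpl in *; [auto|lia].
  - exists (a :: pts), (q :: qs).
    destruct pts as [|t0 pts]; [simpl in H1; lia|]. simpl in H2; subst t0.
    repeat split.
    + simpl in *; lia.
    + destruct pts; [simpl in H1; lia|]. simpl in *. exact H3.
    + intros [|i] Hi; simpl; [exact Hat|]. apply H4. simpl in *; lia.
    + simpl in *; lia.
    + intros [|i] Hi x Hx; simpl in *; [auto|]. apply H6; auto; lia.
Qed.

Section Dn.
Variable m : nat.
Definition Dn (f : R -> R) x := Derive_n f (S m) x.

Lemma rep_sum a b f pts qs : RepAB a b f pts qs ->
  ex_RInt (fun x => Dn f x * Dn f x) a b /\ pp_sum m pts qs = RInt (fun x => Dn f x * Dn f x) a b.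
Proof.
  revert a qs. induction pts as [|t0 pts IH]; intros a qs [H1 [H2 [H3 [H4 [H5 H6]]]]].
  { simpl in H1; lia. }
  destruct pts as [|t1 rest]; [simpl in H1; lia|].
  destruct qs as [|q qs']; [simpl in H5; lia|].
  simpl in H2; subst t0.
  assert (Hlt : a < t1) by (apply (H4 0%nat); simpl; lia).
  assert (Hcell : forall x, a <= x <= t1 -> f x = peval q x).
  { intros x Hx. apply (H6 0%nat); simpl; [lia|exact Hx]. }
  assert (Cell : ex_RInt (fun x => Dn f x * Dn f x) a t1 /\
     sq_int (pderivn (S m) q) a t1 = RInt (fun x => Dn f x * Dn f x) a t1).
  { set (r := pderivn (S m) q).
    assert (Ext : forall x, Rmin a t1 < x < Rmax a t1 -> peval r x * peval r x = Dn f x * Dn f x).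
    { rewrite Rmin_left, Rmax_right by lra. intros x Hx. unfold Dn, r.
      rewrite (Derive_n_cell f q (S m) a t1 x); auto. }
    assert (Ex : ex_RInt (fun x => peval r x * peval r x) a t1).
    { apply (ex_RInt_continuous (V:=R_CompleteNormedModule)). intros z _. apply (continuous_mult (peval r) (peval r)); apply peval_cont. }
    split. { eapply ex_RInt_ext; [intros x Hx; apply Ext; exact Hx|exact Ex]. }
    rewrite <- (RInt_ext (V:=R_CompleteNormedModule) _ _ _ _ Ext). unfold sq_int. destruct (Rle_dec a t1); [|lra].
    rewrite RInt_Reals with (pr := continuity_implies_RiemannInt r0 (fun x _ => sq_peval_continuity r x)). reflexivity. }
  destruct rest as [|t2 rest].
  - simpl in H3; subst t1. simpl. rewrite Rplus_0_r. exact Cell.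
  - assert (Rep : RepAB t1 b f (t1 :: t2 :: rest) qs').
    { repeat split.
      + simpl; lia.
      + simpl in H3 |- *. exact H3.
      + intros i Hi. apply (H4 (S i)). simpl in *; lia.
      + simpl in *; lia.
      + intros i Hi x Hx. apply (H6 (S i)); auto. simpl in *; lia. }
    destruct (IH t1 qs' Rep) as [E1 E2].
    destruct Cell as [C1 C2].
    change (pp_sum m (a :: t1 :: t2 :: rest) (q :: qs')) with
      (sq_int (pderivn (S m) q) a t1 + pp_sum m (t1 :: t2 :: rest) qs').
    split. eapply ex_RInt_Chasles; eauto.
    rewrite C2, E2. rewrite <- (RInt_Chasles _ a t1 b); auto.
Qed.

Lemma seminorm_PW L f : 0 < L -> PW f ->
  seminorm_sq m L f = RInt (fun x => Dn f x * Dn f x) 0 L.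
Proof.
  intros HL Hf.
  destruct (chain_rep f 0 L (chain_exists _ 0 L HL Hf)) as [pts [qs Hr]].
  unfold seminorm_sq.
  destruct (epsilon_spec (inhabits 0)
    (fun s => exists pts qs, PPRep L f pts qs /\ s = pp_sum m pts qs)) as [p2 [q2 [Hr2 ->]]].
  { exists (pp_sum m pts qs), pts, qs. split; auto. }
  apply (rep_sum 0 L f p2 q2 Hr2).
Qed.
End Dn.

End MD.
Import MD.

Module ME.

Lemma loc_cell (P : R -> Prop) s t x : s < x < t -> (forall y, s <= y <= t -> P y) -> locally x P.
Proof.
  intros Hx H. assert (Hd : 0 < Rmin (x - s) (t - x)) by (apply Rmin_case; lra).
  exists (mkposreal _ Hd). intros y Hy. apply H.
  unfold ball in Hy; simpl in Hy; unfold AbsRing_ball, abs, minus, plus, opp in Hy; simpl in Hy.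
  apply Rabs_def2 in Hy.
  assert (Rmin (x - s) (t - x) <= x - s) by apply Rmin_l.
  assert (Rmin (x - s) (t - x) <= t - x) by apply Rmin_r. lra.
Qed.

Lemma ex_derive_n_peval q k y : ex_derive_n (peval q) k y.
Proof.
  destruct k; simpl; [exact I|].
  apply (ex_derive_ext (peval (pderivn k q))). intro t; symmetry; apply Derive_n_peval.
  eexists; apply peval_is_derive.
Qed.

Lemma PolyOn_plus f g s t : PolyOn f s t -> PolyOn g s t -> PolyOn (fun x => f x + g x) s t.
Proof. intros [q1 H1] [q2 H2]. exists (padd q1 q2). intros y Hy. rewrite padd_ok, H1, H2; auto. Qed.
Lemma PolyOn_scal c f s t : PolyOn f s t -> PolyOn (fun x => c * f x) s t.
Proof. intros [q1 H1]. exists (pscal c q1). intros y Hy. rewrite pscal_ok, H1; auto. Qed.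
Lemma PolyOn_sub f s t s' t' : PolyOn f s t -> s <= s' -> t' <= t -> PolyOn f s' t'.
Proof. intros [q H] ? ?. exists q. intros; apply H; lra. Qed.

Section Dn2.
Variable m : nat.
Notation Dn := (Dn m).

Lemma Dn_ext f g x : (forall y, f y = g y) -> Dn f x = Dn g x.
Proof. intro H; apply Derive_n_ext; auto. Qed.

Lemma Dn_scal c f x : Dn (fun y => c * f y) x = c * Dn f x.
Proof. apply Derive_n_scal_l. Qed.

Lemma Dn_shift f c x : Dn (fun y => f (y + c)) x = Dn f (x + c).
Proof. apply Derive_n_comp_trans. Qed.

Lemma Dn_periodic f L x : (forall y, f (y + L) = f y) -> Dn f (x + L) = Dn f x.
Proof. intro H. unfold Dn. rewrite <- Derive_n_comp_trans. apply Derive_n_ext. auto. Qed.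

Lemma Dn_cell f q s t x : (forall y, s <= y <= t -> f y = peval q y) -> s < x < t ->
  Dn f x = peval (pderivn (S m) q) x.
Proof. apply Derive_n_cell. Qed.

Lemma Dn_plus_cell f g s t x : PolyOn f s t -> PolyOn g s t -> s < x < t ->
  Dn (fun y => f y + g y) x = Dn f x + Dn g x.
Proof.
  intros [q1 H1] [q2 H2] Hx. unfold Dn.
  rewrite (Derive_n_ext_loc (fun y => f y + g y) (fun y => peval q1 y + peval q2 y)).
  2:{ apply (loc_cell _ s t); auto. intros y Hy; rewrite H1, H2; auto. }
  rewrite (Derive_n_ext_loc f (peval q1)) by (apply (loc_cell _ s t); auto).
  rewrite (Derive_n_ext_loc g (peval q2)) by (apply (loc_cell _ s t); auto).
  apply Derive_n_plus; apply filter_forall; intros; apply ex_derive_n_peval.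
Qed.

Lemma Dn_cont_cell f s t : PolyOn f s t -> exists P : R -> R,
  (forall x, continuous P x) /\ forall x, s < x < t -> Dn f x = P x.
Proof.
  intros [q H]. exists (peval (pderivn (S m) q)). split; [intro; apply peval_cont|].
  intros; eapply Dn_cell; eauto.
Qed.

Lemma exRInt_cell f g s t : s < t -> PolyOn f s t -> PolyOn g s t ->
  ex_RInt (fun x => Dn f x * Dn g x) s t.
Proof.
  intros Hst Hf Hg. destruct (Dn_cont_cell f s t Hf) as [P1 [C1 E1]].
  destruct (Dn_cont_cell g s t Hg) as [P2 [C2 E2]].
  apply (ex_RInt_ext (fun x => P1 x * P2 x)).
  { rewrite Rmin_left, Rmax_right by lra. intros x Hx; rewrite E1, E2; auto. }
  apply (ex_RInt_continuous (V:=R_CompleteNormedModule)). intros z _.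
  apply (continuous_mult P1 P2); auto.
Qed.

Lemma chain_ex P (phi : R -> R) a b : Chain P a b ->
  (forall s t, P s t -> s < t -> ex_RInt phi s t) -> ex_RInt phi a b.
Proof.
  intros C H; induction C; auto. eapply ex_RInt_Chasles; eauto.
Qed.

Lemma exRInt_PW f g a b : PW f -> PW g -> ex_RInt (fun x => Dn f x * Dn g x) a b.
Proof.
  intros Hf Hg.
  assert (Hab : forall a b, a < b -> ex_RInt (fun x => Dn f x * Dn g x) a b).
  { intros a' b' Hab. apply (chain_ex _ _ a' b' (chain_exists _ a' b' Hab (Loc_and _ _ Hf Hg))).
    intros s t [H1 H2] Hst. apply exRInt_cell; auto. }
  destruct (Rtotal_order a b) as [H|[H|H]].
  - auto.
  - subst; apply ex_RInt_point.
  - apply ex_RInt_swap. auto.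
Qed.
End Dn2.

End ME.
Import ME.

Module MF.

Lemma RInt_window (phi : R -> R) L al :
  (forall x, phi (x + L) = phi x) -> (forall a b, ex_RInt phi a b) ->
  RInt phi al (al + L) = RInt phi 0 L.
Proof.
  intros Hp Hex.
  rewrite <- (RInt_Chasles phi al 0 (al + L)) by auto.
  rewrite <- (RInt_Chasles phi 0 L (al + L)) by auto.
  assert (H1 : RInt phi L (al + L) = RInt phi 0 al).
  { replace L with (1 * 0 + L) at 1 by ring. replace (al + L) with (1 * al + L) by ring.
    rewrite <- (RInt_comp_lin phi 1 L 0 al).
    2:{ auto. }
    apply RInt_ext. intros x _. unfold scal; simpl; unfold mult; simpl.
    rewrite Rmult_1_l, Rmult_1_l. apply Hp. }
  rewrite H1. rewrite <- (opp_RInt_swap phi 0 al) by auto.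
  unfold plus, opp; simpl. ring.
Qed.

Section F.
Variable m : nat.
Notation Dn := (Dn m).
Definition Bf (a b : R) (f g : R -> R) := RInt (fun x => Dn f x * Dn g x) a b.

Lemma Bf_window f g L al : PW f -> PW g -> (forall y, f (y + L) = f y) -> (forall y, g (y + L) = g y) ->
  Bf al (al + L) f g = Bf 0 L f g.
Proof.
  intros Hf Hg Pf Pg. unfold Bf. apply RInt_window.
  - intro x. rewrite !Dn_periodic; auto.
  - intros; apply exRInt_PW; auto.
Qed.

Lemma Bf_shift f g L c : PW f -> PW g -> (forall y, f (y + L) = f y) -> (forall y, g (y + L) = g y) ->
  Bf 0 L (fun x => f (x + c)) (fun x => g (x + c)) = Bf 0 L f g.
Proof.
  intros Hf Hg Pf Pg. rewrite <- (Bf_window f g L c) by auto. unfold Bf.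
  assert (H := RInt_comp_lin (V:=R_CompleteNormedModule) (fun x => Dn f x * Dn g x) 1 c 0 L
    (exRInt_PW m f g _ _ Hf Hg)).
  replace (1 * 0 + c) with c in H by ring. replace (1 * L + c) with (c + L) in H by ring.
  rewrite <- H.
  apply RInt_ext. intros x _. unfold scal; simpl; unfold mult; simpl.
  rewrite !Dn_shift. ring_simplify (1 * x + c). ring.
Qed.

Lemma Bf_ext f f' g g' a b : (forall y, f y = f' y) -> (forall y, g y = g' y) -> Bf a b f g = Bf a b f' g'.
Proof. intros H1 H2. unfold Bf. apply RInt_ext. intros. rewrite (Dn_ext m f f'), (Dn_ext m g g'); auto. Qed.
End F.

End MF.
Import MF.

Module MG.

Lemma deriv_agree_left f g s t l1 l2 : s < t -> (forall y, s <= y <= t -> f y = g y) ->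
  derivable_pt_lim f t l1 -> derivable_pt_lim g t l2 -> l1 = l2.
Proof.
  intros Hst Heq H1 H2. destruct (Req_dec l1 l2) as [|Hne]; auto. exfalso.
  assert (He : 0 < Rabs (l1 - l2) / 2) by (assert (0 < Rabs (l1 - l2)) by (apply Rabs_pos_lt; lra); lra).
  destruct (H1 _ He) as [d1 Hd1]. destruct (H2 _ He) as [d2 Hd2].
  set (h := - (Rmin (Rmin d1 d2) (t - s) / 2)).
  assert (M1 : Rmin (Rmin d1 d2) (t - s) <= Rmin d1 d2) by apply Rmin_l.
  assert (M2 : Rmin (Rmin d1 d2) (t - s) <= t - s) by apply Rmin_r.
  assert (M3 : Rmin d1 d2 <= d1) by apply Rmin_l.
  assert (M4 : Rmin d1 d2 <= d2) by apply Rmin_r.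
  assert (M0 : 0 < Rmin (Rmin d1 d2) (t - s)).
  { apply Rmin_case; [apply Rmin_case; apply cond_pos|lra]. }
  assert (hn : h <> 0) by (unfold h; lra).
  assert (ha1 : Rabs h < d1) by (unfold h; rewrite Rabs_left; lra).
  assert (ha2 : Rabs h < d2) by (unfold h; rewrite Rabs_left; lra).
  specialize (Hd1 h hn ha1). specialize (Hd2 h hn ha2).
  rewrite (Heq (t + h)), (Heq t) in Hd1 by (unfold h; lra).
  apply Rabs_def2 in Hd1. apply Rabs_def2 in Hd2.
  unfold Rabs in *. destruct (Rcase_abs (l1 - l2)); lra.
Qed.

Lemma deriv_agree_right f g s t l1 l2 : s < t -> (forall y, s <= y <= t -> f y = g y) ->
  derivable_pt_lim f s l1 -> derivable_pt_lim g s l2 -> l1 = l2.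
Proof.
  intros Hst Heq H1 H2. destruct (Req_dec l1 l2) as [|Hne]; auto. exfalso.
  assert (He : 0 < Rabs (l1 - l2) / 2) by (assert (0 < Rabs (l1 - l2)) by (apply Rabs_pos_lt; lra); lra).
  destruct (H1 _ He) as [d1 Hd1]. destruct (H2 _ He) as [d2 Hd2].
  set (h := (Rmin (Rmin d1 d2) (t - s) / 2)).
  assert (M1 : Rmin (Rmin d1 d2) (t - s) <= Rmin d1 d2) by apply Rmin_l.
  assert (M2 : Rmin (Rmin d1 d2) (t - s) <= t - s) by apply Rmin_r.
  assert (M3 : Rmin d1 d2 <= d1) by apply Rmin_l.
  assert (M4 : Rmin d1 d2 <= d2) by apply Rmin_r.
  assert (M0 : 0 < Rmin (Rmin d1 d2) (t - s)).
  { apply Rmin_case; [apply Rmin_case; apply cond_pos|lra]. }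
  assert (hn : h <> 0) by (unfold h; lra).
  assert (ha1 : Rabs h < d1) by (unfold h; rewrite Rabs_right; lra).
  assert (ha2 : Rabs h < d2) by (unfold h; rewrite Rabs_right; lra).
  specialize (Hd1 h hn ha1). specialize (Hd2 h hn ha2).
  rewrite (Heq (s + h)), (Heq s) in Hd1 by (unfold h; lra).
  apply Rabs_def2 in Hd1. apply Rabs_def2 in Hd2.
  unfold Rabs in *. destruct (Rcase_abs (l1 - l2)); lra.
Qed.

Lemma piece_derivs m f ds s t r : has_derivs m f ds -> s < t ->
  (forall y, s <= y <= t -> f y = peval r y) ->
  forall b, (b <= m)%nat -> forall y, s <= y <= t -> peval (pderivn b r) y = ds b y.
Proof.
  intros [H0 HS] Hst Hr b. induction b as [|b IH]; intros Hb y Hy.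
  - simpl. rewrite H0. symmetry; auto.
  - assert (IH' : forall y, s <= y <= t -> ds b y = peval (pderivn b r) y)
      by (intros; symmetry; apply IH; auto; lia).
    rewrite pderivn_S.
    destruct (Rle_lt_or_eq_dec s y (proj1 Hy)) as [Hsy|<-].
    + symmetry. apply (deriv_agree_left (ds b) (peval (pderivn b r)) s y).
      lra. intros; apply IH'; lra. apply HS; lia. apply peval_derive.
    + symmetry. apply (deriv_agree_right (ds b) (peval (pderivn b r)) s t).
      lra. intros; apply IH'; lra. apply HS; lia. apply peval_derive.
Qed.

Lemma has_derivs_plus m f g df dg : has_derivs m f df -> has_derivs m g dg ->
  has_derivs m (fun x => f x + g x) (fun k x => df k x + dg k x).
Proof.
  intros [F0 FS] [G0 GS]. split. intros; rewrite F0, G0; auto.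
  intros k Hk x. apply (derivable_pt_lim_plus (df k) (dg k)); auto.
Qed.

Lemma has_derivs_scal m c f df : has_derivs m f df ->
  has_derivs m (fun x => c * f x) (fun k x => c * df k x).
Proof.
  intros [F0 FS]. split. intros; rewrite F0; auto.
  intros k Hk x. apply (derivable_pt_lim_scal (df k)); auto.
Qed.

Lemma has_derivs_poly m q : has_derivs m (peval q) (fun k => peval (pderivn k q)).
Proof. split. reflexivity. intros k _ x. rewrite pderivn_S. apply peval_derive. Qed.

Section Ortho.
Variable m : nat.
Notation Dn := (Dn m).

Lemma ortho_cell al be U d ds : al < be -> (length U <= 2 * m + 2)%nat ->
  PW d -> has_derivs m d ds ->
  (forall b, (b <= m)%nat -> ds b al = 0 /\ ds b be = 0) ->
  RInt (fun x => peval (pderivn (S m) U) x * Dn d x) al be = 0.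
Proof.
  intros Hab HU Hd Hds Hnode.
  set (Dk := fun k x => match k with O => Dn d x | S k' => ds (m - k')%nat x end).
  set (T := fun k x => peval (pderivn (S m + k) U) x * Dk k x).
  assert (Ch := chain_exists _ al be Hab Hd).
  assert (DkC : forall k s t r x, (k <= S m)%nat -> s < t ->
           (forall y, s <= y <= t -> d y = peval r y) -> s < x < t ->
           Dk k x = peval (pderivn (S m - k) r) x).
  { intros k s t r x Hk Hst Hr Hx. destruct k as [|k']; simpl Dk.
    - replace (S m - 0)%nat with (S m) by lia. eapply Dn_cell; eauto.
    - replace (S m - S k')%nat with (m - k')%nat by lia. symmetry.
      apply (piece_derivs m d ds s t r); auto; try lia; lra. }
  assert (ExT : forall k, (k <= S m)%nat -> ex_RInt (T k) al be).
  { intros k Hk. apply (chain_ex _ _ al be Ch). intros s t [r Hr] Hst.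
    apply (ex_RInt_ext (fun x => peval (pderivn (S m + k) U) x * peval (pderivn (S m - k) r) x)).
    { rewrite Rmin_left, Rmax_right by lra. intros x Hx. unfold T. rewrite (DkC k s t r x); auto. }
    apply (ex_RInt_continuous (V:=R_CompleteNormedModule)). intros z _.
    apply (continuous_mult (peval _) (peval _)); apply peval_cont. }
  assert (Step : forall k, (k <= m)%nat -> is_RInt (fun x => T k x + T (S k) x) al be 0).
  { intros k Hk. set (b := (m - k)%nat).
    set (H := fun x => peval (pderivn (S m + k) U) x * ds b x).
    replace 0 with (H be - H al).
    2:{ unfold H. destruct (Hnode b) as [N1 N2]; [unfold b; lia|]. rewrite N1, N2. ring. }
    apply (chain_isRInt _ _ H al be Ch). intros s t [r Hr] Hst.
    set (P0 := fun x => peval (pderivn (S m + k) U) x * peval (pderivn b r) x).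
    assert (Hb : (S m - k = S b)%nat) by (unfold b; lia).
    assert (HP : is_RInt (fun x => peval (pderivn (S (S m + k)) U) x * peval (pderivn b r) x
                    + peval (pderivn (S m + k) U) x * peval (pderivn (S b) r) x) s t (P0 t - P0 s)).
    { apply (is_RInt_derive P0).
      - intros x _. unfold P0.
        apply (is_derive_mult (K:=R_AbsRing) (peval (pderivn (S m + k) U)) (peval (pderivn b r))).
        rewrite pderivn_S; apply peval_is_derive. rewrite pderivn_S; apply peval_is_derive.
        intros; apply Rmult_comm.
      - intros x _. apply (continuous_plus (V:=R_NormedModule)); apply (continuous_mult (K:=R_AbsRing) (peval _) (peval _)); apply peval_cont. }
    replace (H t - H s) with (P0 t - P0 s).
    2:{ unfold H, P0. rewrite !(piece_derivs m d ds s t r Hds Hst Hr b); try lra; try (unfold b; lia). all: try reflexivity. }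
    eapply is_RInt_ext; [|exact HP].
    rewrite Rmin_left, Rmax_right by lra. intros x Hx. unfold T.
    rewrite (DkC k s t r x) by (auto; lia). rewrite Hb.
    simpl Dk. replace (m - k)%nat with b by reflexivity.
    rewrite (piece_derivs m d ds s t r Hds Hst Hr b) by (unfold b; lia || lra).
    replace (S m + S k)%nat with (S (S m + k)) by lia. apply Rplus_comm. }
  assert (Tlast : RInt (T (S m)) al be = 0).
  { rewrite (RInt_ext (V:=R_CompleteNormedModule) _ (fun _ => 0)).
    - rewrite RInt_const. unfold scal; simpl; unfold mult; simpl. apply Rmult_0_r.
    - intros x _. unfold T. rewrite pderivn_zero by lia. apply Rmult_0_l. }
  assert (Down : forall j, (j <= S m)%nat -> RInt (T (S m - j)%nat) al be = 0).
  { induction j as [|j IH]; intros Hj.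
    - replace (S m - 0)%nat with (S m) by lia. exact Tlast.
    - set (k := (S m - S j)%nat).
      assert (Hk : (S k = S m - j)%nat) by (unfold k; lia).
      assert (E1 := is_RInt_unique _ _ _ _ (Step k ltac:(unfold k; lia))).
      rewrite (RInt_plus (V:=R_CompleteNormedModule) (T k) (T (S k))) in E1 by (apply ExT; lia).
      rewrite Hk, IH in E1 by lia. unfold plus in E1; simpl in E1. lra. }
  specialize (Down (S m) (le_n _)). replace (S m - S m)%nat with O in Down by lia.
  rewrite <- Down. apply RInt_ext. intros x _. unfold T, Dk. rewrite Nat.add_0_r. reflexivity.
Qed.
End Ortho.

End MG.
Import MG.

Module MH.

Definition HShape (m K : nat) (h a0 : R) (u : R -> R) : Prop :=
  (forall x, u (x + INR K * h) = u x) /\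
  exists q : nat -> list R, forall j, (j < K)%nat ->
     (length (q j) <= 2 * m + 2)%nat /\
     forall x, a0 + INR j * h <= x <= a0 + INR (S j) * h -> u x = peval (q j) x.

Lemma Hermite_HShape m K h a0 f g : HermiteInterp m K h a0 f g -> HShape m K h a0 g.
Proof.
  intros [Hp [ds [_ [q Hq]]]]. split; auto. exists q. intros j Hj.
  destruct (Hq j Hj) as [H1 [H2 _]]. auto.
Qed.

Lemma InRange_HShape m K h a0 g : InRange m K h a0 g -> HShape m K h a0 g.
Proof. intros [f [_ H]]. eapply Hermite_HShape; eauto. Qed.

Lemma HShape_GridPoly m K h a0 g : HShape m K h a0 g -> GridPoly K h a0 g.
Proof. intros [Hp [q Hq]]. split; auto. exists q. intros j Hj. apply Hq; auto. Qed.

Lemma has_derivs_ext m f g ds : (forall x, f x = g x) -> has_derivs m f ds -> has_derivs m g ds.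
Proof. intros E [H0 HS]. split; auto. intros; rewrite H0; auto. Qed.

Section H.
Variable m : nat.
Notation Dn := (Dn m).
Notation Bf := (Bf m).

Lemma Bf_sym a b f g : Bf a b f g = Bf a b g f.
Proof. unfold Bf. apply RInt_ext. intros; apply Rmult_comm. Qed.

Lemma ortho_global K h a0 u a b gp gm : (1 <= K)%nat -> 0 < h ->
  HShape m K h a0 u -> PW a -> PW b ->
  (forall x, a (x + INR K * h) = a x) -> (forall x, b (x + INR K * h) = b x) ->
  HermiteInterp m K h a0 a gp -> HermiteInterp m K h a0 b gm ->
  Bf 0 (INR K * h) u (fun x => gp x - gm x - a x + b x) = 0.
Proof.
  intros HK Hh Hu Ha Hb Pa Pb Hgp Hgm.
  set (L := INR K * h).
  set (e := fun x => gp x - gm x - a x + b x).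
  assert (PWu : PW u) by (apply (GridPoly_PW K h a0); auto; apply (HShape_GridPoly m); auto).
  assert (PWgp : PW gp) by (apply (GridPoly_PW K h a0); auto; eapply Hermite_GridPoly; eauto).
  assert (PWgm : PW gm) by (apply (GridPoly_PW K h a0); auto; eapply Hermite_GridPoly; eauto).
  assert (PWe : PW e).
  { unfold e. apply PW_plus; auto. apply PW_minus; auto. apply PW_minus; auto. }
  assert (Pe : forall x, e (x + L) = e x).
  { intro x. unfold e. destruct Hgp as [P1 _]. destruct Hgm as [P2 _].
    unfold L in *. rewrite P1, P2, Pa, Pb. reflexivity. }
  rewrite <- (Bf_window m u e L a0); auto; [|apply Hu].
  destruct Hu as [_ [qu Hqu]].
  destruct Hgp as [_ [da [Hda [q1 Hq1]]]].
  destruct Hgm as [_ [db [Hdb [q2 Hq2]]]].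
  assert (Cell : forall j, (j < K)%nat ->
    RInt (fun x => Dn u x * Dn e x) (a0 + INR j * h) (a0 + INR (S j) * h) = 0).
  { intros j Hj.
    destruct (Hqu j Hj) as [HUl HU].
    destruct (Hq1 j Hj) as [_ [G1 N1]].
    destruct (Hq2 j Hj) as [_ [G2 N2]].
    set (al := a0 + INR j * h). set (be := a0 + INR (S j) * h).
    assert (Hab : al < be) by (unfold al, be; rewrite S_INR; nra).
    set (et := fun x => (peval (q1 j) x + (-1) * peval (q2 j) x) + ((-1) * a x + b x)).
    set (dst := fun k x => (peval (pderivn k (q1 j)) x + (-1) * peval (pderivn k (q2 j)) x)
                          + ((-1) * da k x + db k x)).
    assert (Hdt : has_derivs m et dst).
    { unfold et, dst.
      apply (has_derivs_plus m (fun x => peval (q1 j) x + (-1) * peval (q2 j) x) (fun x => (-1) * a x + b x)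
        (fun k x => peval (pderivn k (q1 j)) x + (-1) * peval (pderivn k (q2 j)) x)
        (fun k x => (-1) * da k x + db k x)).
      - apply (has_derivs_plus m (peval (q1 j)) (fun x => (-1) * peval (q2 j) x)
          (fun k => peval (pderivn k (q1 j))) (fun k x => (-1) * peval (pderivn k (q2 j)) x)).
        apply has_derivs_poly.
        apply (has_derivs_scal m (-1) (peval (q2 j)) (fun k => peval (pderivn k (q2 j)))).
        apply has_derivs_poly.
      - apply (has_derivs_plus m (fun x => (-1) * a x) b (fun k x => (-1) * da k x) db); auto.
        apply (has_derivs_scal m (-1) a da); auto. }
    assert (PWet : PW et).
    { unfold et. apply PW_plus; apply PW_plus; try apply PW_scal; auto; apply PW_poly. }
    assert (Ho := ortho_cell m al be (qu j) et dst Hab HUl PWet Hdt).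
    rewrite <- Ho.
    - apply RInt_ext. rewrite Rmin_left, Rmax_right by lra. intros x Hx.
      rewrite (Dn_cell m u (qu j) al be x) by (auto; lra). f_equal.
      unfold Dn, MD.Dn. apply Derive_n_ext_loc. apply (loc_cell _ al be); auto.
      intros y Hy. unfold e, et. rewrite G1, G2 by (unfold al, be in *; lra). ring.
    - intros k Hk. destruct (N1 k Hk) as [A1 A2]. destruct (N2 k Hk) as [B1 B2].
      unfold dst. fold al be in A1, A2, B1, B2. rewrite A1, A2, B1, B2. split; ring. }
  assert (Sum : forall n, (n <= K)%nat ->
     RInt (fun x => Dn u x * Dn e x) a0 (a0 + INR n * h) = 0).
  { induction n as [|n IH]; intro Hn.
    - simpl. rewrite Rmult_0_l, Rplus_0_r. apply (RInt_point (V:=R_CompleteNormedModule)).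
    - rewrite <- (RInt_Chasles (V:=R_CompleteNormedModule) _ a0 (a0 + INR n * h));
        try apply exRInt_PW; auto.
      rewrite IH by lia. rewrite Cell by lia. unfold plus; simpl. ring. }
  unfold MF.Bf. apply Sum. lia.
Qed.
End H.

End MH.
Import MH.

Module MI.

Lemma isR_plus (f g : R -> R) a b (l1 l2 : R) : is_RInt f a b l1 -> is_RInt g a b l2 ->
  is_RInt (fun x => f x + g x) a b (l1 + l2).
Proof. intros H1 H2. exact (is_RInt_plus f g a b l1 l2 H1 H2). Qed.
Lemma isR_scal c (f : R -> R) a b (l : R) : is_RInt f a b l -> is_RInt (fun x => c * f x) a b (c * l).
Proof. intros H1. exact (@is_RInt_scal R_NormedModule f a b c l H1). Qed.
Lemma isR_ext (f g : R -> R) a b (l : R) : (forall x, Rmin a b < x < Rmax a b -> g x = f x) -> is_RInt f a b l -> is_RInt g a b l.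
Proof. intros E H1. eapply is_RInt_ext; [|exact H1]. intros; symmetry; apply E; auto. Qed.

Definition lc5 (c1 c2 c3 c4 c5 : R) (f1 f2 f3 f4 f5 : R -> R) :=
  fun y => c1 * f1 y + (c2 * f2 y + (c3 * f3 y + (c4 * f4 y + c5 * f5 y))).

Lemma PolyOn_lin2 c f g s t : PolyOn f s t -> PolyOn g s t -> PolyOn (fun y => c * f y + g y) s t.
Proof. intros; apply PolyOn_plus; auto; apply PolyOn_scal; auto. Qed.

Section I.
Variable m : nat.
Notation Dn := (Dn m).
Notation Bf := (Bf m).

Lemma Dn_lin2 c f g s t x : PolyOn f s t -> PolyOn g s t -> s < x < t ->
  Dn (fun y => c * f y + g y) x = c * Dn f x + Dn g x.
Proof.
  intros Hf Hg Hx. rewrite (Dn_plus_cell m (fun y => c * f y) g s t x); auto.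
  rewrite Dn_scal; auto. apply PolyOn_scal; auto.
Qed.

Lemma Dn_lc5 c1 c2 c3 c4 c5 f1 f2 f3 f4 f5 s t x :
  PolyOn f1 s t -> PolyOn f2 s t -> PolyOn f3 s t -> PolyOn f4 s t -> PolyOn f5 s t -> s < x < t ->
  Dn (lc5 c1 c2 c3 c4 c5 f1 f2 f3 f4 f5) x =
  c1 * Dn f1 x + (c2 * Dn f2 x + (c3 * Dn f3 x + (c4 * Dn f4 x + c5 * Dn f5 x))).
Proof.
  intros H1 H2 H3 H4 H5 Hx. unfold lc5.
  assert (P5 : PolyOn (fun y => c5 * f5 y) s t) by (apply PolyOn_scal; auto).
  assert (P4 : PolyOn (fun y => c4 * f4 y + c5 * f5 y) s t) by (apply PolyOn_lin2; auto).
  assert (P3 : PolyOn (fun y => c3 * f3 y + (c4 * f4 y + c5 * f5 y)) s t) by (apply PolyOn_lin2; auto).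
  assert (P2 : PolyOn (fun y => c2 * f2 y + (c3 * f3 y + (c4 * f4 y + c5 * f5 y))) s t)
    by (apply PolyOn_lin2; auto).
  rewrite (Dn_lin2 c1 f1 _ s t x H1 P2 Hx).
  rewrite (Dn_lin2 c2 f2 _ s t x H2 P3 Hx).
  rewrite (Dn_lin2 c3 f3 _ s t x H3 P4 Hx).
  rewrite (Dn_lin2 c4 f4 _ s t x H4 P5 Hx).
  rewrite Dn_scal. reflexivity.
Qed.

Lemma step K h a0 w a b gp gm : (1 <= K)%nat -> 0 < h ->
  HShape m K h a0 w -> PW a -> PW b ->
  (forall x, a (x + INR K * h) = a x) -> (forall x, b (x + INR K * h) = b x) ->
  HermiteInterp m K h a0 a gp -> HermiteInterp m K h a0 b gm ->
  Bf 0 (INR K * h) (fun x => w x - b x + (gp x - gm x - a x + b x))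
                   (fun x => w x - b x + (gp x - gm x - a x + b x))
  + Bf 0 (INR K * h) (fun x => w x + a x + (gp x - gm x - a x + b x))
                     (fun x => w x + a x + (gp x - gm x - a x + b x))
  = Bf 0 (INR K * h) (fun x => w x - b x) (fun x => w x - b x)
  + Bf 0 (INR K * h) (fun x => w x + a x) (fun x => w x + a x).
Proof.
  intros HK Hh Hw Ha Hb Pa Pb Hgp Hgm.
  set (L := INR K * h).
  assert (HL : 0 < L) by (unfold L; assert (1 <= INR K) by (apply (le_INR 1); auto); nra).
  set (e := fun x => gp x - gm x - a x + b x).
  assert (O1 := ortho_global m K h a0 w a b gp gm HK Hh Hw Ha Hb Pa Pb Hgp Hgm).
  assert (O2 := ortho_global m K h a0 gp a b gp gm HK Hh (Hermite_HShape _ _ _ _ _ _ Hgp) Ha Hb Pa Pb Hgp Hgm).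
  assert (O3 := ortho_global m K h a0 gm a b gp gm HK Hh (Hermite_HShape _ _ _ _ _ _ Hgm) Ha Hb Pa Pb Hgp Hgm).
  fold L e in O1, O2, O3.
  assert (PWw : PW w) by (apply (GridPoly_PW K h a0); auto; apply (HShape_GridPoly m); auto).
  assert (PWgp : PW gp) by (apply (GridPoly_PW K h a0); auto; eapply Hermite_GridPoly; eauto).
  assert (PWgm : PW gm) by (apply (GridPoly_PW K h a0); auto; eapply Hermite_GridPoly; eauto).
  set (F1 := lc5 1 (-1) 0 1 (-1) w a b gp gm).
  set (F2 := lc5 1 0 1 1 (-1) w a b gp gm).
  set (G1 := lc5 1 0 (-1) 0 0 w a b gp gm).
  set (G2 := lc5 1 1 0 0 0 w a b gp gm).
  set (E := lc5 0 (-1) 1 1 (-1) w a b gp gm).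
  assert (PWlc : forall c1 c2 c3 c4 c5, PW (lc5 c1 c2 c3 c4 c5 w a b gp gm)).
  { intros. unfold lc5.
    repeat (apply PW_plus; [apply PW_scal; auto|]). apply PW_scal; auto. }
  rewrite (Bf_ext m (fun x => w x - b x + (gp x - gm x - a x + b x)) F1 (fun x => w x - b x + (gp x - gm x - a x + b x)) F1) by (intro; unfold F1, lc5; ring).
  rewrite (Bf_ext m (fun x => w x + a x + (gp x - gm x - a x + b x)) F2 (fun x => w x + a x + (gp x - gm x - a x + b x)) F2) by (intro; unfold F2, lc5; ring).
  rewrite (Bf_ext m (fun x => w x - b x) G1 (fun x => w x - b x) G1) by (intro; unfold G1, lc5; ring).
  rewrite (Bf_ext m (fun x => w x + a x) G2 (fun x => w x + a x) G2) by (intro; unfold G2, lc5; ring).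
  rewrite (Bf_ext m w w e E) in O1 by (reflexivity || (intro; unfold e, E, lc5; ring)).
  rewrite (Bf_ext m gp gp e E) in O2 by (reflexivity || (intro; unfold e, E, lc5; ring)).
  rewrite (Bf_ext m gm gm e E) in O3 by (reflexivity || (intro; unfold e, E, lc5; ring)).
  assert (I : forall f g, PW f -> PW g -> is_RInt (fun x => Dn f x * Dn g x) 0 L (Bf 0 L f g)).
  { intros f g Hf Hg. apply (RInt_correct (V:=R_CompleteNormedModule)). apply exRInt_PW; auto. }
  set (Th := fun x => (Dn F1 x * Dn F1 x + Dn F2 x * Dn F2 x)
                      + (-1) * (Dn G1 x * Dn G1 x + Dn G2 x * Dn G2 x)
                      + (-1) * (4 * (Dn w x * Dn E x) + (2 * (Dn gp x * Dn E x) + (-2) * (Dn gm x * Dn E x)))).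
  assert (T1 : is_RInt Th 0 L ((Bf 0 L F1 F1 + Bf 0 L F2 F2) + (-1) * (Bf 0 L G1 G1 + Bf 0 L G2 G2)
                  + (-1) * (4 * Bf 0 L w E + (2 * Bf 0 L gp E + (-2) * Bf 0 L gm E)))).
  { unfold Th. apply isR_plus. apply isR_plus. apply isR_plus; apply I; first [apply PWlc | auto].
    refine (isR_scal (-1) _ _ _ _ _). apply isR_plus; apply I; first [apply PWlc | auto].
    refine (isR_scal (-1) _ _ _ _ _). apply isR_plus. refine (isR_scal 4 _ _ _ _ _); apply I; first [apply PWlc | auto].
    apply isR_plus. refine (isR_scal 2 _ _ _ _ _); apply I; first [apply PWlc | auto]. refine (isR_scal (-2) _ _ _ _ _); apply I; first [apply PWlc | auto]. }
  assert (T2 : is_RInt Th 0 L ((fun _ : R => 0) L - (fun _ : R => 0) 0)).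
  { apply (chain_isRInt _ Th (fun _ => 0) 0 L (chain_exists _ 0 L HL
       (Loc_and _ _ PWw (Loc_and _ _ Ha (Loc_and _ _ Hb (Loc_and _ _ PWgp PWgm)))))).
    intros s t [H1 [H2 [H3 [H4 H5]]]] Hst.
    apply (isR_ext (fun _ => 0)).
    2:{ replace (0 - 0) with (scal (t - s) 0).
        apply (is_RInt_const (V:=R_NormedModule)). unfold scal; simpl; unfold mult; simpl. ring. }
    rewrite Rmin_left, Rmax_right by lra. intros x Hx.
    unfold Th, F1, F2, G1, G2, E.
    rewrite !(Dn_lc5 _ _ _ _ _ w a b gp gm s t x) by auto. ring. }
  apply (is_RInt_unique (V:=R_CompleteNormedModule)) in T1.
  apply (is_RInt_unique (V:=R_CompleteNormedModule)) in T2.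
  rewrite T1 in T2. rewrite O1, O2, O3 in T2. lra.
Qed.
End I.

End MI.
Import MI.

Module MJ.

Section J.
Variable m : nat.
Notation Dn := (Dn m).
Notation Bf := (Bf m).

Lemma Bf_neg a b g : Bf a b (fun x => -1 * g x) (fun x => -1 * g x) = Bf a b g g.
Proof. unfold MF.Bf. apply RInt_ext. intros. rewrite !Dn_scal.
  assert (Hq : forall u : R, -1 * u * (-1 * u) = u * u) by (intro; ring). apply Hq. Qed.

Lemma generic_step K h a0 c dt w f gp gm v2 : (1 <= K)%nat -> 0 < h ->
  HShape m K h a0 w -> PW f -> (forall x, f (x + INR K * h) = f x) ->
  HermiteInterp m K h a0 (Splus c dt f) gp -> HermiteInterp m K h a0 (Sminus c dt f) gm ->
  (forall x, v2 x = w x + gp x - gm x) ->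
  seminorm_sq m (INR K * h) (fun x => v2 x - Splus c dt f x)
  + seminorm_sq m (INR K * h) (fun x => v2 x + Sminus c dt f x)
  = seminorm_sq m (INR K * h) (fun x => f x - Splus c dt w x)
  + seminorm_sq m (INR K * h) (fun x => f x + Sminus c dt w x).
Proof.
  intros HK Hh Hw Hf Pf Hgp Hgm Hv2.
  set (L := INR K * h).
  assert (HL : 0 < L) by (unfold L; assert (1 <= INR K) by (apply (le_INR 1); auto); nra).
  set (s := c * dt / 2).
  set (a := Splus c dt f). set (b := Sminus c dt f).
  assert (PWw : PW w) by (apply (GridPoly_PW K h a0); auto; apply (HShape_GridPoly m); auto).
  assert (Pw : forall x, w (x + L) = w x) by apply Hw.
  assert (PWgp : PW gp) by (apply (GridPoly_PW K h a0); auto; eapply Hermite_GridPoly; eauto).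
  assert (PWgm : PW gm) by (apply (GridPoly_PW K h a0); auto; eapply Hermite_GridPoly; eauto).
  assert (PWa : PW a) by (apply PW_shift; auto).
  assert (PWb : PW b).
  { apply (PW_ext (fun x => f (x + - s))). intro; unfold b, Sminus, s; f_equal; ring. apply PW_shift; auto. }
  assert (PWsw1 : PW (Splus c dt w)) by (apply PW_shift; auto).
  assert (PWsw2 : PW (Sminus c dt w)).
  { apply (PW_ext (fun x => w (x + - s))). intro; unfold Sminus, s; f_equal; ring. apply PW_shift; auto. }
  assert (Pa : forall x, a (x + L) = a x).
  { intro x. unfold a, Splus. replace (x + L + c * dt / 2) with ((x + c * dt / 2) + INR K * h) by (unfold L; ring). apply Pf. }
  assert (Pb : forall x, b (x + L) = b x).
  { intro x. unfold b, Sminus. replace (x + L - c * dt / 2) with ((x - c * dt / 2) + INR K * h) by (unfold L; ring). apply Pf. }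
  assert (Step := step m K h a0 w a b gp gm HK Hh Hw PWa PWb Pa Pb Hgp Hgm). fold L in Step.
  assert (PW1 : PW (fun x => v2 x - a x)).
  { apply (PW_ext (fun x => w x + gp x - gm x - a x)). intro; rewrite Hv2; ring.
    apply PW_minus; auto. apply PW_minus; auto. apply PW_plus; auto. }
  assert (PW2 : PW (fun x => v2 x + b x)).
  { apply (PW_ext (fun x => w x + gp x - gm x + b x)). intro; rewrite Hv2; ring.
    apply PW_plus; auto. apply PW_minus; auto. apply PW_plus; auto. }
  assert (PW3 : PW (fun x => f x - Splus c dt w x)) by (apply PW_minus; auto).
  assert (PW4 : PW (fun x => f x + Sminus c dt w x)) by (apply PW_plus; auto).
  rewrite !(seminorm_PW m L) by auto.
  change (Bf 0 L (fun x => v2 x - a x) (fun x => v2 x - a x)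
        + Bf 0 L (fun x => v2 x + b x) (fun x => v2 x + b x)
        = Bf 0 L (fun x => f x - Splus c dt w x) (fun x => f x - Splus c dt w x)
        + Bf 0 L (fun x => f x + Sminus c dt w x) (fun x => f x + Sminus c dt w x)).
  rewrite (Bf_ext m (fun x => v2 x - a x) (fun x => w x - b x + (gp x - gm x - a x + b x))
                    (fun x => v2 x - a x) (fun x => w x - b x + (gp x - gm x - a x + b x)))
    by (intro; rewrite Hv2; ring).
  rewrite (Bf_ext m (fun x => v2 x + b x) (fun x => w x + a x + (gp x - gm x - a x + b x))
                    (fun x => v2 x + b x) (fun x => w x + a x + (gp x - gm x - a x + b x)))
    by (intro; rewrite Hv2; ring).
  rewrite Step.
  assert (Pf3 : forall x, (fun x => f x - Splus c dt w x) (x + L) = (fun x => f x - Splus c dt w x) x).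
  { intro x; simpl. unfold Splus. rewrite Pf. f_equal. replace (x + L + c * dt / 2) with ((x + c * dt / 2) + L) by ring.
    apply Pw. }
  assert (Pf4 : forall x, (fun x => f x + Sminus c dt w x) (x + L) = (fun x => f x + Sminus c dt w x) x).
  { intro x; simpl. unfold Sminus. rewrite Pf. f_equal. replace (x + L - c * dt / 2) with ((x - c * dt / 2) + L) by ring.
    apply Pw. }
  assert (E3 : forall y, (fun x => f x - Splus c dt w x) (y + - s) = -1 * (w y - b y)).
  { intro y. unfold b, Sminus, Splus, s. cbv beta.
    replace (y + - (c * dt / 2) + c * dt / 2) with y by ring.
    replace (y + - (c * dt / 2)) with (y - c * dt / 2) by ring. ring. }
  assert (E4 : forall y, (fun x => f x + Sminus c dt w x) (y + s) = w y + a y).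
  { intro y. unfold a, Sminus, Splus, s. cbv beta.
    replace (y + c * dt / 2 - c * dt / 2) with y by ring. ring. }
  rewrite <- (Bf_shift m _ _ L (- s) PW3 PW3 Pf3 Pf3).
  rewrite <- (Bf_shift m _ _ L s PW4 PW4 Pf4 Pf4).
  rewrite (Bf_ext m _ (fun x => -1 * (w x - b x)) _ (fun x => -1 * (w x - b x)) 0 L E3 E3).
  rewrite Bf_neg.
  rewrite (Bf_ext m _ (fun x => w x + a x) _ (fun x => w x + a x) 0 L E4 E4).
  reflexivity.
Qed.
End J.

End MJ.
Import MJ.

Theorem mainTheorem1
  (m K : nat) (h c dt : R) (p v : nat -> R -> R) :
  (1 <= K)%nat -> 0 < h -> 0 < c -> 0 < dt ->
  (forall n, InRange m K h 0 (p n)) ->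
  (forall n, InRange m K h (h / 2) (v n)) ->
  (forall n, exists gp gm,
      HermiteInterp m K h (h / 2) (Splus c dt (p n)) gp /\
      HermiteInterp m K h (h / 2) (Sminus c dt (p n)) gm /\
      forall x, v (S n) x = v n x + gp x - gm x) ->
  (forall n, exists gp gm,
      HermiteInterp m K h 0 (Splus c dt (v (S n))) gp /\
      HermiteInterp m K h 0 (Sminus c dt (v (S n))) gm /\
      forall x, p (S n) x = p n x + gp x - gm x) ->
  let L := INR K * h in
  let Q := fun n =>
    seminorm_sq m L (fun x => p n x - Splus c dt (v n) x)
    + seminorm_sq m L (fun x => p n x + Sminus c dt (v n) x) in
  let Rh := fun n =>
    seminorm_sq m L (fun x => v (S n) x - Splus c dt (p n) x)
    + seminorm_sq m L (fun x => v (S n) x + Sminus c dt (p n) x) in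
  forall n : nat, Q (S n) = Rh n /\ Rh n = Q n /\ Q n = Q 0%nat /\ Rh n = Q 0%nat.
Proof.
  intros HK Hh Hc Hdt HP HV Hv Hp L Q Rh.
  assert (A : forall n, Rh n = Q n).
  { intro n. destruct (Hv n) as [gp [gm [H1 [H2 H3]]]].
    unfold Rh, Q, L.
    apply (generic_step m K h (h / 2) c dt (v n) (p n) gp gm (v (S n))); auto.
    - apply (InRange_HShape m K h (h / 2)); auto.
    - apply (GridPoly_PW K h 0); auto. apply (InRange_GridPoly m); auto.
    - apply (InRange_GridPoly m K h 0); auto. }
  assert (B : forall n, Q (S n) = Rh n).
  { intro n. destruct (Hp n) as [gp [gm [H1 [H2 H3]]]].
    unfold Rh, Q, L.
    apply (generic_step m K h 0 c dt (p n) (v (S n)) gp gm (p (S n))); auto.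
    - apply (InRange_HShape m K h 0); auto.
    - apply (GridPoly_PW K h (h / 2)); auto. apply (InRange_GridPoly m); auto.
    - apply (InRange_GridPoly m K h (h / 2)); auto. }
  assert (C : forall n, Q n = Q 0%nat).
  { induction n; auto. rewrite B, A. exact IHn. }
  intro n. repeat split; auto. rewrite A; auto.
Qed.
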